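(* Let $G$ be a group with finite generating set $S$, let $\Gamma=Cay(G,S)$, and let $k,m>0$. Then $\Gamma$ is $\varepsilon$-densely $(k,m)$-chordal for some $\varepsilon>0$ if and only if $G$ is $(i_0,k,m)$-chordal with respect to $S$ for some $i_0>0$.
   Context: $S^{\pm1}=S\cup S^{-1}\setminus\{e\}$; $Cay(G,S)$ has vertex set $G$, edges $\{g,gs\}$ ($s\in S^{\pm1}$), each edge isometric to $[0,1]$. A cycle in a graph is a simple closed path (of length at least 3); $L(\cdot)$ denotes length and $d_\gamma$ the length metric on the cycle $\gamma$. A shortcut in $\gamma$ is a path $\sigma$ joining vertices $p,q$ of $\gamma$ with $L(\sigma)<d_\gamma(p,q)$; it is strict if $\sigma\cap\gamma=\{p,q\}$, and then $p,q$ are its associated shortcut vertices. A graph is $\varepsilon$-densely $(k,m)$-chordal if for every cycle $\gamma$ with $L(\gamma)\ge k$ there are strict shortcuts $\sigma_1,\dots,\sigma_r$ with $L(\sigma_i)\le m$ whose associated shortcut vertices form an $\varepsilon$-dense subset of $(\gamma,d_\gamma)$ (every point of $\gamma$ is at $d_\gamma$-distance $<\varepsilon$ from one of them). A relation $s_1\cdots s_n=e$ with $n>2$, $s_i\in S^{\pm1}$, is simple if $s_ps_{p+1}\cdots s_q=e$ holds exactly when $(p,q)=(1,n)$. $G$ is $(i_0,k,m)$-chordal with respect to $S$ if for every simple relation $s_1\cdots s_n=e$ with $n\ge k$ there exist $1\le i\le i_0$, $i<j\le n$ and $s'_1,\dots,s'_r\in S^{\pm1}$ with $s_i\cdots s_j=s'_1\cdots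 s'_r$ and $r\le\min\{m,\,j-i,\,n-j+i-2\}$. *)

(* Defs.v *)
From Stdlib Require Import Reals Lra Lia List Arith.
Import ListNotations.
Open Scope R_scope.

Record group := Group {
  gcar :> Type;
  gmul : gcar -> gcar -> gcar;
  ginv : gcar -> gcar;
  gone : gcar;
  gmulA : forall x y z, gmul x (gmul y z) = gmul (gmul x y) z;
  gmul1 : forall x, gmul gone x = x;
  gmulV : forall x, gmul (ginv x) x = gone
}.

Section Cayley.
Variable G : group.
Variable S : list G.

Definition gprod (w : list G) : G := fold_right (gmul G) (gone G) w.

Definition Spm (x : G) : Prop := (In x S \/ In (ginv G x) S) /\ x <> gone G.

Definition generates : Prop :=
  forall g : G, exists w, Forall Spm w /\ g = gprod w.

Definition cadj (g h : G) : Prop := exists s, Spm s /\ h = gmul G g s.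

Fixpoint is_path (x : G) (l : list G) : Prop :=
  match l with
  | [] => True
  | y :: l' => cadj x y /\ is_path y l'
  end.

Definition is_cycle (c : list G) : Prop :=
  (3 <= length c)%nat /\ NoDup c /\
  forall i, (i < length c)%nat ->
    cadj (nth i c (gone G)) (nth ((i + 1) mod length c) c (gone G)).

Definition cycdist (n i j : nat) : nat :=
  Nat.min (Nat.max i j - Nat.min i j) (n - (Nat.max i j - Nat.min i j)).

(* d_gamma between arbitrary points of the cycle (parametrised by [0,n)) *)
Definition rcycdist (n x y : R) : R := Rmin (Rabs (x - y)) (n - Rabs (x - y)).

(* a strict shortcut in c joining c_i and c_j:
   sigma = x :: l is a path from c_i to c_j of length L(sigma) = length l,
   with L(sigma) < d_c(c_i,c_j), meeting c only at c_i, c_j. *)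
Definition strict_shortcut (c : list G) (i j : nat) (x : G) (l : list G) : Prop :=
  (i < length c)%nat /\ (j < length c)%nat /\
  x = nth i c (gone G) /\ last (x :: l) x = nth j c (gone G) /\
  is_path x l /\
  (length l < cycdist (length c) i j)%nat /\
  (forall v, In v (x :: l) -> In v c ->
     v = nth i c (gone G) \/ v = nth j c (gone G)).

Definition densely_chordal (eps : R) (k m : nat) : Prop :=
  forall c, is_cycle c -> (k <= length c)%nat ->
    exists sc : list (nat * nat * (G * list G)),
      (forall i j x l, In (i, j, (x, l)) sc ->
         strict_shortcut c i j x l /\ (length l <= m)%nat) /\
      (forall t : R, 0 <= t < INR (length c) ->
         exists i j x l, In (i, j, (x, l)) sc /\
           (rcycdist (INR (length c)) t (INR i) < eps \/
            rcycdist (INR (length c)) t (INR j) < eps)).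

(* the subword s_p ... s_q (1-based indices) *)
Definition subword (w : list G) (p q : nat) : list G :=
  firstn (Nat.succ q - p) (skipn (pred p) w).

Definition simple_relation (w : list G) : Prop :=
  Forall Spm w /\ (2 < length w)%nat /\ gprod w = gone G /\
  forall p q, (1 <= p)%nat -> (p <= q)%nat -> (q <= length w)%nat ->
    (gprod (subword w p q) = gone G <-> (p = 1 /\ q = length w)%nat).

(* G is (i0,k,m)-chordal w.r.t. S.  The bound r <= n - j + i - 2 is written
   r + 2 + j <= n + i to avoid truncated subtraction. *)
Definition group_chordal (i0 k m : nat) : Prop :=
  forall w, simple_relation w -> (k <= length w)%nat ->
    exists i j w',
      (1 <= i <= i0)%nat /\ (i < j <= length w)%nat /\
      Forall Spm w' /\ gprod (subword w i j) = gprod w' /\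
      (length w' <= m)%nat /\ (length w' <= j - i)%nat /\
      (length w' + 2 + j <= length w + i)%nat.

End Cayley.

(* Main.v *)
Require Import Defs.
From Stdlib Require Import Reals List Arith Lia Lra Classical.
Import ListNotations.
Open Scope R_scope.
Open Scope R_scope.

Section GL.
Variable G : group.
Notation "x * y" := (gmul G x y).
Notation e := (gone G).
Notation iv := (ginv G).

Lemma mulVr (x : G) : x * iv x = e.
Proof.
  rewrite <- (gmul1 G (x * iv x)).
  rewrite <- (gmulV G (iv x)) at 1.
  rewrite <- gmulA. rewrite (gmulA G (iv x) x (iv x)).
  rewrite gmulV, gmul1. apply gmulV.
Qed.

Lemma mulr1 (x : G) : x * e = x.
Proof. rewrite <- (gmulV G x), gmulA, mulVr, gmul1. reflexivity. Qed.

Lemma mulKV (x y : G) : iv x * (x * y) = y.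
Proof. rewrite gmulA, gmulV, gmul1. reflexivity. Qed.

Lemma mulKr (x y : G) : x * (iv x * y) = y.
Proof. rewrite gmulA, mulVr, gmul1. reflexivity. Qed.

Lemma mul_lcancel (x y z : G) : x * y = x * z -> y = z.
Proof. intro H. rewrite <- (mulKV x y), H, mulKV. reflexivity. Qed.

Lemma inv_uniq (x y : G) : x * y = e -> y = iv x.
Proof. intro H. rewrite <- (mulKV x y), H, mulr1. reflexivity. Qed.

Lemma invK (x : G) : iv (iv x) = x.
Proof. symmetry. apply inv_uniq. apply gmulV. Qed.

Lemma invM (x y : G) : iv (x * y) = iv y * iv x.
Proof. symmetry. apply inv_uniq. rewrite gmulA, <- (gmulA G x y), mulVr, mulr1, mulVr. reflexivity. Qed.

Lemma inv1 : iv e = e.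
Proof. symmetry. apply inv_uniq. apply gmul1. Qed.

Lemma gprod_app (l1 l2 : list G) : gprod G (l1 ++ l2) = gprod G l1 * gprod G l2.
Proof. induction l1; simpl. rewrite gmul1; reflexivity. rewrite IHl1, gmulA. reflexivity. Qed.

Lemma gprod_revinv (u : list G) : gprod G (rev (map iv u)) = iv (gprod G u).
Proof.
  induction u; simpl. symmetry; apply inv1.
  rewrite gprod_app, IHu. simpl. rewrite mulr1, invM. reflexivity.
Qed.

Lemma Spm_inv S (x : G) : Spm G S x -> Spm G S (iv x).
Proof.
  intros [H Hn]; split.
  - destruct H as [H|H]. right. rewrite invK. exact H. left. exact H.
  - intro E. apply Hn. rewrite <- (invK x), E. apply inv1.
Qed.

End GL.
Open Scope nat_scope.
Set Warnings "-deprecated".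

Lemma cycdist_sym n a b : cycdist n a b = cycdist n b a.
Proof. unfold cycdist; lia. Qed.

Lemma cycdist_tri n a b c : a < n -> b < n -> c < n ->
  cycdist n a c <= cycdist n a b + cycdist n b c.
Proof. unfold cycdist; lia. Qed.

Lemma mod_big n z : n <> 0 -> n <= z < 2 * n -> z mod n = z - n.
Proof.
  intros Hn Hz. replace z with ((z - n) + 1 * n) at 1 by lia.
  rewrite Nat.mod_add by exact Hn. apply Nat.mod_small. lia.
Qed.

Lemma cycdist_mod n x d : n <> 0 -> d <= n ->
  cycdist n (x mod n) ((x + d) mod n) = Nat.min d (n - d).
Proof.
  intros Hn Hd. rewrite <- Nat.add_mod_idemp_l by exact Hn.
  assert (Hy := Nat.mod_upper_bound x n Hn).
  set (y := x mod n) in *. clearbody y.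
  destruct (lt_dec (y + d) n).
  - rewrite (Nat.mod_small (y+d)) by lia. unfold cycdist; lia.
  - rewrite mod_big by lia. unfold cycdist; lia.
Qed.

Lemma mod_eq_shift n x d : n <> 0 -> 1 <= d <= n -> x mod n = (x + d) mod n -> d = n.
Proof.
  intros Hn Hd H. rewrite <- Nat.add_mod_idemp_l in H by exact Hn.
  assert (Hy := Nat.mod_upper_bound x n Hn).
  set (y := x mod n) in *. clearbody y.
  destruct (lt_dec (y + d) n).
  - rewrite (Nat.mod_small (y+d)) in H by lia. lia.
  - rewrite mod_big in H by lia. lia.
Qed.

Lemma firstn_split {A} (w : list A) a b : a <= b ->
  firstn b w = firstn a w ++ firstn (b - a) (skipn a w).
Proof.
  revert w b; induction a; intros w b H.
  - simpl. rewrite Nat.sub_0_r. reflexivity.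
  - destruct b. lia. destruct w. simpl. destruct (b - a); reflexivity.
    simpl. rewrite (IHa w b) by lia. reflexivity.
Qed.

Lemma firstn_S_nth {A} (w : list A) i d : i < length w ->
  firstn (S i) w = firstn i w ++ [nth i w d].
Proof.
  revert w; induction i; intros w H; destruct w; simpl in *; try lia.
  reflexivity. rewrite (IHi w) by lia. reflexivity.
Qed.

Lemma nth_map_seq {A} (f : nat -> A) n t d : t < n -> nth t (map f (seq 0 n)) d = f t.
Proof.
  intro H. rewrite (nth_indep _ d (f 0)) by (rewrite length_map, length_seq; exact H).
  rewrite map_nth, seq_nth by exact H. reflexivity.
Qed.

Lemma first_split {A} (P : A -> Prop) (l : list A) :
  (exists y, In y l /\ P y) ->
  exists l1 y l2, l = l1 ++ y :: l2 /\ P y /\ Forall (fun v => ~ P v) l1.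
Proof.
  induction l as [|a l IH]; intros [y [Hy Py]]. destruct Hy.
  destruct (classic (P a)) as [Pa|nPa].
  - exists [], a, l. split; [reflexivity|split; [exact Pa| constructor]].
  - destruct Hy as [->|Hy]. contradiction.
    destruct IH as [l1 [z [l2 [E [Pz F]]]]]. exists y; split; assumption.
    exists (a :: l1), z, l2. rewrite E. split; [reflexivity|split; [exact Pz|constructor; assumption]].
Qed.

Lemma last_indep {A} (a : A) l d d' : last (a :: l) d = last (a :: l) d'.
Proof. revert a; induction l; intro a0; simpl. reflexivity. apply IHl. Qed.

Lemma last_app_cons {A} (l1 : list A) y l2 d : last (l1 ++ y :: l2) d = last (y :: l2) d.
Proof.
  induction l1 as [|a l1 IH]. reflexivity.
  rewrite <- IH. simpl. destruct (l1 ++ y :: l2) eqn:E. destruct l1; discriminate. reflexivity.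
Qed.

Section PL.
Variable G : group.
Variable S : list G.
Notation "x * y" := (gmul G x y).
Notation e := (gone G).
Notation iv := (ginv G).

Lemma is_path_app x l1 l2 :
  is_path G S x (l1 ++ l2) <-> is_path G S x l1 /\ is_path G S (last (x :: l1) x) l2.
Proof.
  revert x; induction l1 as [|a l1 IH]; intro x.
  - simpl. tauto.
  - cbn [is_path app]. rewrite IH.
    replace (last (x :: a :: l1) x) with (last (a :: l1) a).
    tauto. change (last (x :: a :: l1) x) with (last (a :: l1) x). apply last_indep.
Qed.

Lemma path_word x l : is_path G S x l ->
  exists u, Forall (Spm G S) u /\ length u = length l /\ last (x :: l) x = x * gprod G u.
Proof.
  revert x; induction l as [|a l IH]; intros x H.
  - exists []. simpl. split. constructor. split. reflexivity. symmetry; apply mulr1.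
  - destruct H as [[s [Hs E]] H]. destruct (IH a H) as [u [Fu [Lu Eu]]].
    exists (s :: u). split. constructor; assumption. split. simpl; congruence.
    change (last (x :: a :: l) x) with (last (a :: l) x).
    rewrite (last_indep a l x a), Eu, E. simpl. symmetry; apply gmulA.
Qed.

Lemma path_of x u : Forall (Spm G S) u ->
  exists l, is_path G S x l /\ length l = length u /\ last (x :: l) x = x * gprod G u.
Proof.
  revert x; induction u as [|s u IH]; intros x H.
  - exists []. simpl. split. exact I. split. reflexivity. symmetry; apply mulr1.
  - inversion H as [|? ? Hs Hu]; subst. destruct (IH (x * s) Hu) as [l [Pl [Ll El]]].
    exists (x * s :: l). split. split. exists s; split; [exact Hs|reflexivity]. exact Pl.
    split. simpl; congruence.
    change (last (x :: x * s :: l) x) with (last (x * s :: l) x).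
    rewrite (last_indep _ l x (x * s)), El. simpl. symmetry; apply gmulA.
Qed.

Lemma telescope (f : nat -> G) a len :
  gprod G (map (fun t => iv (f t) * f (Datatypes.S t)) (seq a len)) = iv (f a) * f (a + len).
Proof.
  revert a; induction len; intro a; simpl.
  - rewrite Nat.add_0_r, gmulV. reflexivity.
  - rewrite IHlen, <- gmulA, mulKr, Nat.add_succ_r. reflexivity.
Qed.

End PL.
Open Scope nat_scope.
Set Warnings "-deprecated".

Lemma In_last {A} (z : A) l d : In (last (z :: l) d) (z :: l).
Proof.
  revert z; induction l as [|a l IH]; intro z. left; reflexivity.
  change (last (z :: a :: l) d) with (last (a :: l) d). right. apply IH.
Qed.

Section EX.
Variable G : group.
Variable S : list G.
Notation "x * y" := (gmul G x y).
Notation e := (gone G).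
Notation iv := (ginv G).
Variable c : list G.
Hypothesis NDc : NoDup c.

Lemma extract : forall N l x a b, length l <= N ->
  a < length c -> b < length c -> x = nth a c e -> last (x :: l) x = nth b c e ->
  is_path G S x l -> length l < cycdist (length c) a b ->
  exists i' j' x' l', strict_shortcut G S c i' j' x' l' /\ length l' <= length l /\
     cycdist (length c) a i' <= length l.
Proof.
  induction N as [N IHN] using lt_wf_ind.
  intros l x a b HN Ha Hb Hx Hl Hp Hd.
  destruct l as [|z l0].
  - exfalso. simpl in Hl. subst x.
    assert (a = b). { eapply NoDup_nth; eauto. } subst. unfold cycdist in Hd. simpl in Hd. lia.
  - assert (Hin : exists y, In y (z :: l0) /\ In y c).
    { exists (last (z :: l0) x). split. apply In_last.
      change (last (x :: z :: l0) x) with (last (z :: l0) x) in Hl. rewrite Hl. apply nth_In; exact Hb. }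
    destruct (first_split (fun v => In v c) _ Hin) as [l1 [y [l2 [EL [Hyc F]]]]].
    rewrite EL in *. clear Hin.
    destruct (In_nth c y e Hyc) as [e' [He' Ey]].
    assert (Hp' := Hp). replace (l1 ++ y :: l2) with ((l1 ++ [y]) ++ l2) in Hp' by (rewrite <- app_assoc; reflexivity).
    apply is_path_app in Hp'. destruct Hp' as [Hp1 Hp2].
    assert (Ely : last (x :: l1 ++ [y]) x = y).
    { change (x :: l1 ++ [y]) with ((x :: l1) ++ [y]). apply last_last. }
    rewrite Ely in Hp2.
    rewrite length_app in Hd, HN |- *. simpl length in Hd, HN |- *.
    destruct (lt_dec (length l1 + 1) (cycdist (length c) a e')) as [Hq|Hq].
    + exists a, e', x, (l1 ++ [y]). split; [|split].
      * unfold strict_shortcut. split; [exact Ha|]. split; [exact He'|]. split; [exact Hx|].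
        split. rewrite Ely. symmetry; exact Ey.
        split. exact Hp1.
        split. rewrite length_app; simpl; exact Hq.
        intros v Hv Hvc. destruct Hv as [Hv|Hv]. left; subst; reflexivity.
        apply in_app_or in Hv. destruct Hv as [Hv|[Hv|[]]].
        rewrite Forall_forall in F. exfalso; exact (F v Hv Hvc).
        right. rewrite <- Hv; symmetry; exact Ey.
      * rewrite length_app; simpl. lia.
      * unfold cycdist. lia.
    + assert (Hl2 : last (y :: l2) y = nth b c e).
      { rewrite <- Hl. change (x :: l1 ++ y :: l2) with ((x :: l1) ++ y :: l2).
        rewrite last_app_cons. apply last_indep. }
      assert (Htri := cycdist_tri (length c) a e' b Ha He' Hb).
      destruct (IHN (length l2) ltac:(lia) l2 y e' b (le_n _) He' Hb (eq_sym Ey) Hl2 Hp2 ltac:(lia))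
        as [i' [j' [x' [l' [Hs [Hl' Hc]]]]]].
      exists i', j', x', l'. split; [exact Hs|]. split. lia.
      destruct Hs as [Hi' _].
      assert (Htri2 := cycdist_tri (length c) a e' i' Ha He' Hi'). lia.
Qed.

End EX.
Open Scope nat_scope.
Set Warnings "-deprecated".

Lemma firstn_seq' k a len : firstn k (seq a len) = seq a (Nat.min k len).
Proof.
  revert a len; induction k; intros a len. reflexivity.
  destruct len. reflexivity. simpl. rewrite IHk. reflexivity.
Qed.

Lemma collect {A} n (P : nat -> A -> Prop) : (forall r, r < n -> exists y, P r y) ->
  exists L, (forall y, In y L -> exists r, r < n /\ P r y) /\
            (forall r, r < n -> exists y, In y L /\ P r y).
Proof.
  induction n; intro H.
  - exists []. split. intros y []. intros r Hr; lia.
  - destruct IHn as [L [H1 H2]]. intros r Hr; apply H; lia.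
    destruct (H n (Nat.lt_succ_diag_r n)) as [y Hy].
    exists (y :: L). split.
    + intros z [<-|Hz]. exists n; split; [lia|exact Hy].
      destruct (H1 z Hz) as [r [Hr Pr]]. exists r; split; [lia|exact Pr].
    + intros r Hr. destruct (Nat.eq_dec r n) as [->|Hne]. exists y; split; [left; reflexivity|exact Hy].
      destruct (H2 r ltac:(lia)) as [z [Hz Pz]]. exists z; split; [right; exact Hz|exact Pz].
Qed.

Open Scope R_scope.

Lemma floor_nat n t : 0 <= t < INR n -> exists r, (r < n)%nat /\ INR r <= t < INR r + 1.
Proof.
  induction n; intros [H0 H1]. simpl in H1; lra.
  destruct (Rlt_dec t (INR n)) as [Hl|Hl].
  - destruct (IHn (conj H0 Hl)) as [r [Hr Hr']]. exists r; split; [lia|exact Hr'].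
  - exists n. split. lia. rewrite S_INR in H1. lra.
Qed.

Lemma rcyc_bound n r i D t : (r < n)%nat -> (i < n)%nat -> (cycdist n r i <= D)%nat ->
  INR r <= t < INR r + 1 -> rcycdist (INR n) t (INR i) < INR D + 1.
Proof.
  intros Hr Hi Hc Ht. unfold cycdist in Hc. unfold rcycdist.
  assert (Hcases : ((r <= i /\ i - r <= D) \/ (i <= r /\ r - i <= D) \/
                    (r <= i /\ n - (i - r) <= D) \/ (i <= r /\ n - (r - i) <= D))%nat) by (clear Ht; lia).
  assert (Hr2 := lt_INR _ _ Hr). assert (Hi2 := lt_INR _ _ Hi).
  destruct Hcases as [[H1 H2]|[[H1 H2]|[[H1 H2]|[H1 H2]]]].
  - apply Rle_lt_trans with (Rabs (t - INR i)). apply Rmin_l.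
    apply le_INR in H2. rewrite minus_INR in H2 by lia. apply le_INR in H1.
    unfold Rabs; destruct (Rcase_abs _); lra.
  - apply Rle_lt_trans with (Rabs (t - INR i)). apply Rmin_l.
    apply le_INR in H2. rewrite minus_INR in H2 by lia. apply le_INR in H1.
    unfold Rabs; destruct (Rcase_abs _); lra.
  - apply Rle_lt_trans with (INR n - Rabs (t - INR i)). apply Rmin_r.
    assert (HH: (i - r <= n)%nat) by lia.
    apply le_INR in H2. rewrite !minus_INR in H2 by lia. apply le_INR in H1.
    unfold Rabs; destruct (Rcase_abs _); lra.
  - apply Rle_lt_trans with (INR n - Rabs (t - INR i)). apply Rmin_r.
    assert (HH: (r - i <= n)%nat) by lia.
    apply le_INR in H2. rewrite !minus_INR in H2 by lia. apply le_INR in H1.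
    unfold Rabs; destruct (Rcase_abs _); lra.
Qed.
Open Scope nat_scope.
Set Warnings "-deprecated".

Section ROT.
Variable G : group.
Variable S : list G.
Notation "x * y" := (gmul G x y).
Notation e := (gone G).
Notation iv := (ginv G).
Variable c : list G.
Hypothesis Hc : is_cycle G S c.
Let n := length c.

Definition fr r t := nth ((r + t) mod n) c e.
Definition wr r := map (fun t => iv (fr r t) * fr r (Datatypes.S t)) (seq 0 n).

Lemma n_pos : n <> 0.
Proof. destruct Hc as [H _]. unfold n. lia. Qed.

Lemma wr_len r : length (wr r) = n.
Proof. unfold wr. rewrite length_map, length_seq. reflexivity. Qed.

Lemma sub_prod r p q : 1 <= p -> p <= q -> q <= n ->
  gprod G (subword G (wr r) p q) = iv (fr r (p - 1)) * fr r q.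
Proof.
  intros H1 H2 H3. unfold subword, wr.
  rewrite skipn_map, firstn_map, skipn_seq, firstn_seq', telescope.
  destruct p as [|p']; [lia|]. cbn [pred Nat.add]. rewrite Nat.sub_succ.
  replace (p' + Nat.min (q - p') (n - p')) with q by (clear -H1 H2 H3; lia).
  rewrite Nat.sub_1_r. reflexivity.
Qed.

Lemma fr_n r : fr r n = fr r 0.
Proof.
  unfold fr. rewrite Nat.add_0_r. replace (r + n) with (r + 1 * n) by lia.
  rewrite Nat.mod_add by exact n_pos. reflexivity.
Qed.

Lemma rot_simple r : simple_relation G S (wr r).
Proof.
  assert (Hn := n_pos).
  destruct Hc as [H3 [ND Hadj]]. fold n in H3, Hadj.
  split; [|split; [|split]].
  - apply Forall_forall. intros s Hs. unfold wr in Hs. apply in_map_iff in Hs.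
    destruct Hs as [t [<- Ht]].
    set (u := (r + t) mod n).
    assert (Hu : u < n) by (apply Nat.mod_upper_bound; exact Hn).
    destruct (Hadj u Hu) as [s [Hs E]].
    unfold fr. fold u. replace ((r + Datatypes.S t) mod n) with ((u + 1) mod n).
    rewrite E, mulKV. exact Hs.
    unfold u. rewrite Nat.add_mod_idemp_l by exact Hn. f_equal; lia.
  - rewrite wr_len. lia.
  - unfold wr. rewrite telescope. simpl. rewrite fr_n. apply gmulV.
  - intros p q Hp Hpq Hq. rewrite wr_len in Hq. rewrite sub_prod by assumption. split.
    + intro E. apply inv_uniq in E. rewrite invK in E. unfold fr in E.
      apply NoDup_nth in E; [| exact ND | apply Nat.mod_upper_bound; exact Hn | apply Nat.mod_upper_bound; exact Hn].
      replace (r + q) with ((r + (p - 1)) + (q - (p - 1))) in E by lia.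
      symmetry in E. apply mod_eq_shift in E; [|exact Hn|lia]. rewrite wr_len. lia.
    + rewrite wr_len. intros [-> ->]. simpl. rewrite fr_n. apply gmulV.
Qed.

End ROT.
Open Scope nat_scope.
Set Warnings "-deprecated".

Lemma backward (G : group) (S : list G) k m i0 : 0 < i0 ->
  group_chordal G S i0 k m -> densely_chordal G S (INR (i0 + m) + 1) k m.
Proof.
  intros Hi0 Hgc c Hc Hk.
  assert (Hn := n_pos G S c Hc).
  assert (ND : NoDup c) by (destruct Hc as [_ [ND _]]; exact ND).
  set (n := length c) in *.
  assert (A : forall r, r < n -> exists y : nat * nat * (G * list G),
    match y with (i', j', (x, l)) =>
      strict_shortcut G S c i' j' x l /\ length l <= m /\ cycdist n r i' <= i0 + m end).
  { intros r Hr.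
    destruct (Hgc (wr G c r) (rot_simple G S c Hc r)) as [i [j [w' [Hi [Hj [Fw [Ew [Lm [L1 L2]]]]]]]]].
    rewrite wr_len; exact Hk.
    rewrite wr_len in Hj, L2. fold n in Hj, L2.
    rewrite sub_prod in Ew by (fold n; lia).
    destruct (path_of G S (fr G c r (i-1)) w' Fw) as [l [Pl [Ll El]]].
    rewrite <- Ew, mulKr in El.
    assert (Ha : (r + (i - 1)) mod n < n) by (apply Nat.mod_upper_bound; exact Hn).
    assert (Hb : (r + j) mod n < n) by (apply Nat.mod_upper_bound; exact Hn).
    assert (Hd : length l < cycdist n ((r + (i - 1)) mod n) ((r + j) mod n)).
    { replace (r + j) with ((r + (i - 1)) + (j - i + 1)) by lia.
      rewrite cycdist_mod by lia. lia. }
    destruct (extract G S c ND (length l) l (fr G c r (i-1)) _ _ (le_n _) Ha Hb eq_refl El Pl Hd)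
      as [i' [j' [x' [l' [Hs [Hl' Hc']]]]]].
    exists (i', j', (x', l')). split; [exact Hs|]. split; [lia|].
    assert (Hi' : i' < n) by (destruct Hs as [Hi' _]; exact Hi').
    assert (Htri := cycdist_tri n r ((r + (i - 1)) mod n) i' Hr Ha Hi').
    assert (Hra : cycdist n r ((r + (i - 1)) mod n) <= i0).
    { rewrite <- (Nat.mod_small r n Hr) at 1. rewrite cycdist_mod by lia. lia. }
    eapply Nat.le_trans; [exact Htri|]. apply Nat.add_le_mono; [exact Hra|]. eapply Nat.le_trans; [exact Hc'|]. lia. }
  destruct (collect n _ A) as [L [H1 H2]].
  exists L. split.
  - intros i j x l Hin. destruct (H1 _ Hin) as [r [_ [Hs [Hl _]]]]. split; assumption.
  - intros t Ht. destruct (floor_nat n t Ht) as [r [Hr Hrt]].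
    destruct (H2 r Hr) as [[[i' j'] [x l]] [Hin [Hs [_ Hcd]]]].
    exists i', j', x, l. split; [exact Hin|]. left.
    apply (rcyc_bound n r i' (i0 + m) t Hr); [destruct Hs; assumption|exact Hcd|exact Hrt].
Qed.
Open Scope nat_scope.
Set Warnings "-deprecated".

Lemma near_N n N e0 eps : 2 * N + 1 <= n -> e0 < n -> (eps <= INR N)%R ->
  (rcycdist (INR n) (INR N) (INR e0) < eps)%R -> e0 < 2 * N.
Proof.
  intros H1 H2 H3 H4.
  apply le_INR in H1. apply lt_INR in H2.
  rewrite plus_INR, mult_INR in H1. simpl (INR 2) in H1. simpl (INR 1) in H1.
  destruct (lt_dec e0 (2 * N)) as [|Hn]; [assumption|exfalso].
  assert (H5 : (2 * INR N <= INR e0)%R).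
  { replace (2 * INR N)%R with (INR (2 * N)) by (rewrite mult_INR; reflexivity).
    apply le_INR. lia. }
  assert (P1 := pos_INR N). assert (P2 := pos_INR e0).
  unfold rcycdist, Rmin in H4. destruct (Rle_dec _ _);
  unfold Rabs in *; destruct (Rcase_abs _); lra.
Qed.

Section FW.
Variable G : group.
Variable S : list G.
Notation "x * y" := (gmul G x y).
Notation e := (gone G).
Notation iv := (ginv G).
Variable w : list G.
Hypothesis Hw : simple_relation G S w.
Let n := length w.
Definition cw := map (fun t => gprod G (firstn t w)) (seq 0 n).

Lemma cw_len : length cw = n.
Proof. unfold cw. rewrite length_map, length_seq. reflexivity. Qed.

Lemma cw_nth t : t < n -> nth t cw e = gprod G (firstn t w).
Proof. intro H. unfold cw. apply (nth_map_seq (fun t => gprod G (firstn t w))). exact H. Qed.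

Lemma cw_sub a b : a <= b -> b <= n ->
  nth b cw e = nth a cw e * gprod G (subword G w (a + 1) b) \/ b = n.
Proof. Abort.

Lemma pref_sub a b : a <= b ->
  gprod G (firstn b w) = gprod G (firstn a w) * gprod G (subword G w (a + 1) b).
Proof.
  intro H. rewrite (firstn_split w a b H), gprod_app. unfold subword.
  replace (pred (a + 1)) with a by lia. change (Nat.succ b) with (Datatypes.S b). replace (Datatypes.S b - (a + 1)) with (b - a) by lia.
  reflexivity.
Qed.

Lemma cw_distinct a b : a < b -> b < n -> nth a cw e <> nth b cw e.
Proof.
  intros H1 H2 E. rewrite !cw_nth in E by lia.
  rewrite (pref_sub a b) in E by lia.
  rewrite <- (mulr1 G (gprod G (firstn a w))) in E at 1.
  apply mul_lcancel in E.
  destruct Hw as [_ [_ [_ Hs]]].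
  assert (Hx : a + 1 = 1 /\ b = length w) by (apply Hs; [lia|lia|fold n; lia|symmetry; exact E]).
  fold n in Hx. lia.
Qed.

Lemma cw_cycle : is_cycle G S cw.
Proof.
  destruct Hw as [F [H2 [He _]]]. fold n in H2.
  split; [|split].
  - rewrite cw_len. lia.
  - apply (NoDup_nth cw e). rewrite cw_len. intros i j Hi Hj E.
    destruct (Nat.lt_total i j) as [H|[H|H]]; [|exact H|].
    + exfalso. exact (cw_distinct i j H Hj E).
    + exfalso. exact (cw_distinct j i H Hi (eq_sym E)).
  - rewrite cw_len. intros i Hi.
    assert (Hs : Spm G S (nth i w e)).
    { rewrite Forall_forall in F. apply F. apply nth_In. exact Hi. }
    exists (nth i w e). split; [exact Hs|].
    rewrite (cw_nth i Hi).
    assert (Hf : gprod G (firstn (i + 1) w) = gprod G (firstn i w) * nth i w e).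
    { rewrite Nat.add_1_r, (firstn_S_nth w i e) by exact Hi. rewrite gprod_app. simpl.
      rewrite mulr1. reflexivity. }
    destruct (Nat.eq_dec (i + 1) n) as [Eq|Ne].
    + rewrite Eq, Nat.mod_same by lia. rewrite cw_nth by lia. simpl.
      rewrite <- Hf, Eq. unfold n. rewrite firstn_all. symmetry; exact He.
    + rewrite Nat.mod_small by lia. rewrite cw_nth by lia. exact Hf.
Qed.

Lemma conc a b u i0 m : a < b -> b < n -> Forall (Spm G S) u ->
  nth b cw e = nth a cw e * gprod G u -> length u < cycdist n a b -> length u <= m ->
  a + 1 <= i0 ->
  exists i j w',
      (1 <= i <= i0)%nat /\ (i < j <= length w)%nat /\
      Forall (Spm G S) w' /\ gprod G (subword G w i j) = gprod G w' /\
      (length w' <= m)%nat /\ (length w' <= j - i)%nat /\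
      (length w' + 2 + j <= length w + i)%nat.
Proof.
  intros H1 H2 F E Lc Lm Hi0.
  assert (Hu : u <> []).
  { intro U. subst u. simpl in E. rewrite mulr1 in E. exact (cw_distinct a b H1 H2 (eq_sym E)). }
  assert (Hu1 : 1 <= length u) by (destruct u; [contradiction|simpl; lia]).
  exists (a + 1), b, u. fold n. unfold cycdist in Lc.
  split; [lia|]. split; [lia|]. split; [exact F|]. split.
  - rewrite !cw_nth in E by lia. rewrite (pref_sub a b) in E by lia.
    apply mul_lcancel in E. exact E.
  - lia.
Qed.

End FW.

Open Scope R_scope.

Lemma forward (G : group) (S : list G) k m eps : 0 < eps ->
  densely_chordal G S eps k m -> exists i0, (0 < i0)%nat /\ group_chordal G S i0 k m.
Proof.
  intros Heps Hd.
  destruct (INR_archimed 1 eps ltac:(lra)) as [N HN]. rewrite Rmult_1_r in HN.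
  assert (HN0 : (0 < N)%nat). { destruct N. simpl in HN; lra. lia. }
  exists (2 * N)%nat. split; [lia|].
  intros w Hw Hk.
  assert (Hcyc := cw_cycle G S w Hw).
  assert (Hlen := cw_len G w). remember (length w) as n eqn:En.
  destruct (Hd (cw G w) Hcyc) as [sc [Hsc1 Hsc2]]. rewrite Hlen; exact Hk.
  rewrite Hlen in Hsc2.
  set (t := if le_lt_dec (2 * N + 1) n then INR N else 0).
  assert (Ht : 0 <= t < INR n).
  { unfold t. destruct (le_lt_dec _ _) as [H|H].
    - split. apply pos_INR. apply lt_INR. lia.
    - split. lra. apply (lt_INR 0). destruct Hw as [_ [H2 _]]. lia. }
  destruct (Hsc2 t Ht) as [a [b [x [l [Hin Hnear]]]]].
  destruct (Hsc1 a b x l Hin) as [Hs Hlm].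
  destruct Hs as [Ha [Hb [Hx [Hl [Hp [Hlt _]]]]]].
  rewrite Hlen in Ha, Hb, Hlt.
  assert (Hbound : (Nat.min a b + 1 <= 2 * N)%nat).
  { unfold t in Hnear. destruct (le_lt_dec _ _) as [H|H].
    - destruct Hnear as [Hn|Hn].
      + assert (a < 2 * N)%nat by (apply (near_N n N a eps); [lia|lia|lra|exact Hn]). lia.
      + assert (b < 2 * N)%nat by (apply (near_N n N b eps); [lia|lia|lra|exact Hn]). lia.
    - lia. }
  destruct (path_word G S x l Hp) as [u [Fu [Lu Eu]]].
  rewrite Hl, Hx in Eu.
  assert (Hab : a <> b). { intro E. subst b. unfold cycdist in Hlt. lia. }
  subst n. destruct (Nat.lt_total a b) as [H|[H|H]]; [|contradiction|].
  - apply (conc G S w Hw a b u (2 * N) m H Hb Fu Eu); [lia|lia|lia].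
  - apply (conc G S w Hw b a (rev (map (ginv G) u)) (2 * N) m H Ha).
    + apply Forall_rev. apply Forall_map. eapply Forall_impl; [|exact Fu]. apply Spm_inv.
    + rewrite gprod_revinv, Eu, <- gmulA, mulVr, mulr1. reflexivity.
    + rewrite length_rev, length_map, cycdist_sym. lia.
    + rewrite length_rev, length_map. lia.
    + lia.
Qed.

Open Scope R_scope.

Theorem theorem9 (G : group) (S : list G) (k m : nat) :
  generates G S -> (0 < k)%nat -> (0 < m)%nat ->
  ((exists eps : R, 0 < eps /\ densely_chordal G S eps k m) <->
   (exists i0 : nat, (0 < i0)%nat /\ group_chordal G S i0 k m)).
Proof.
  intros _ _ _. split.
  - intros [eps [He Hd]]. exact (forward G S k m eps He Hd).
  - intros [i0 [Hi Hg]]. exists (INR (i0 + m) + 1). split.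
    + assert (P := pos_INR (i0 + m)). lra.
    + exact (backward G S k m i0 Hi Hg).
Qed.
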